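(* There are no rational numbers (in particular, no integers) $x_1,x_2,x_3,d_1,d_2,d_3,L$ with $x_1,x_2,x_3,d_1,d_2,d_3>0$ such that $\operatorname{rank}N\le 2$, $\operatorname{rank}N_1=2$, $\operatorname{rank}N_2=2$, and $\tilde p_1=\tilde p_2=\dots=\tilde p_8=0$. Likewise there are no such positive rational numbers with $\operatorname{rank}N\le 2$, $\operatorname{rank}N_1=\operatorname{rank}N_2=2$ satisfying $p_0=p_1=p_2=p_3=0$.
   Context: Define $p_0=x_1^2+x_2^2+x_3^2-L^2$, $p_1=x_2^2+x_3^2-d_1^2$, $p_2=x_3^2+x_1^2-d_2^2$, $p_3=x_1^2+x_2^2-d_3^2$, and $\tilde p_1=p_0$, $\tilde p_2=p_1+p_2+p_3$, $\tilde p_3=d_1p_1+d_2p_2+d_3p_3$, $\tilde p_4=x_1p_1+x_2p_2+x_3p_3$, $\tilde p_5=x_1d_1p_1+x_2d_2p_2+x_3d_3p_3$, $\tilde p_6=x_1^2p_1+x_2^2p_2+x_3^2p_3$, $\tilde p_7=d_1^2p_1+d_2^2p_2+d_3^2p_3$, $\tilde p_8=x_1^2d_1^2p_1+x_2^2d_2^2p_2+x_3^2d_3^2p_3$. $N$ is the $3\times 7$ matrix whose $i$-th row is $(1,\ d_i,\ x_i,\ x_id_i,\ x_i^2,\ d_i^2,\ x_i^2d_i^2)$; $N_1$ is the $3\times 2$ matrix with rows $(1,d_i)$; $N_2$ is the $3\times 2$ matrix with rows $(1,x_i)$, $i=1,2,3$. Ranks are over $\mathbb{Q}$. *)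

(* Defs.v *)
From HB Require Import structures.
From mathcomp Require Import all_boot all_order all_algebra.
Set Implicit Arguments. Unset Strict Implicit. Unset Printing Implicit Defensive.
Import Order.TTheory GRing.Theory Num.Theory.
Local Open Scope ring_scope.

Definition vec3 (a1 a2 a3 : rat) (i : 'I_3) : rat :=
  match val i with 0%N => a1 | 1%N => a2 | _ => a3 end.

(* p_0 and p_i (i = 1,2,3 encoded as indices 0,1,2) *)
Definition p0 (x1 x2 x3 L : rat) : rat := x1^+2 + x2^+2 + x3^+2 - L^+2.
Definition pp (x1 x2 x3 d1 d2 d3 : rat) (i : 'I_3) : rat :=
  match val i with
  | 0%N => x2^+2 + x3^+2 - d1^+2
  | 1%N => x3^+2 + x1^+2 - d2^+2
  | _ => x1^+2 + x2^+2 - d3^+2 end.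

Definition Nrow (xi di : rat) (j : 'I_7) : rat :=
  match val j with
  | 0%N => 1 | 1%N => di | 2%N => xi | 3%N => xi * di
  | 4%N => xi^+2 | 5%N => di^+2 | _ => xi^+2 * di^+2 end.
Definition Nmat (x1 x2 x3 d1 d2 d3 : rat) : 'M[rat]_(3,7) :=
  \matrix_(i < 3, j < 7) Nrow (vec3 x1 x2 x3 i) (vec3 d1 d2 d3 i) j.
Definition N1mat (d1 d2 d3 : rat) : 'M[rat]_(3,2) :=
  \matrix_(i < 3, j < 2) (if val j == 0%N then 1 else vec3 d1 d2 d3 i).
Definition N2mat (x1 x2 x3 : rat) : 'M[rat]_(3,2) :=
  \matrix_(i < 3, j < 2) (if val j == 0%N then 1 else vec3 x1 x2 x3 i).

(* tilde p_k, k = 2..8: sum_i c_k(i) p_i with c the weights of the paper *)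
Definition ptilde_sum (x1 x2 x3 d1 d2 d3 : rat) (c : 'I_3 -> rat) : rat :=
  \sum_(i < 3) c i * pp x1 x2 x3 d1 d2 d3 i.

Definition ptilde_all_zero (x1 x2 x3 d1 d2 d3 L : rat) : Prop :=
  let x := vec3 x1 x2 x3 in let d := vec3 d1 d2 d3 in
  let S := ptilde_sum x1 x2 x3 d1 d2 d3 in
  p0 x1 x2 x3 L = 0 /\
  S (fun _ => 1) = 0 /\
  S d = 0 /\
  S x = 0 /\
  S (fun i => x i * d i) = 0 /\
  S (fun i => x i ^+ 2) = 0 /\
  S (fun i => d i ^+ 2) = 0 /\
  S (fun i => x i ^+ 2 * d i ^+ 2) = 0.

(* Main.v *)
Require Import Defs.
From HB Require Import structures.
From mathcomp Require Import all_boot all_order all_algebra.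
Import Order.TTheory GRing.Theory Num.Theory.
Local Open Scope ring_scope.
From mathcomp Require Import zify ring lra.
Lemma nat_sqrt2 (m k : nat) : (0 < k)%N -> (m ^ 2 = 2 * k ^ 2)%N -> False.
Proof.
move=> k0 E.
have m0 : (0 < m)%N.
  case: m E => [|m] // E; move: E; rewrite exp0n //; nia.
have := congr1 (logn 2) E.
rewrite lognM // ?expn_gt0 ?k0 // !lognX.
rewrite (@pfactorK 2 1) //=. lia.
Qed.

Lemma no_sqrt2 (a b : rat) : b != 0 -> a^+2 = 2 * b^+2 -> False.
Proof.
move=> b0 E.
have E2 : (a / b) ^+ 2 = 2 by rewrite expr_div_n E mulfK // expf_neq0.
move: E2; rewrite -[a / b]divq_num_den; set n := numq _; set d := denq _.
have d0 : (d%:~R : rat) != 0 by rewrite intr_eq0 gt_eqF // denq_gt0.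
rewrite expr_div_n => E3.
have E4 : n ^+ 2 = 2 * d ^+ 2.
  apply: (@intr_inj rat); rewrite !expr2 !rmorphM /=.
  have -> : ((2:int)%:~R : rat) = 2 by [].
  by rewrite -E3 !expr2 divfK // mulf_neq0.
have := congr1 absz E4; rewrite abszM !abszX /= => E5.
apply: (@nat_sqrt2 `|n|%N `|d|%N); last by rewrite E5.
by rewrite absz_gt0 gt_eqF // denq_gt0.
Qed.
Lemma kerN x1 x2 x3 d1 d2 d3 : (\rank (Nmat x1 x2 x3 d1 d2 d3) <= 2)%N ->
  exists a b c : rat, ~~ [&& a == 0, b == 0 & c == 0] /\ a+b+c=0 /\
   a*d1+b*d2+c*d3=0 /\ a*x1+b*x2+c*x3=0 /\ a*d1^+2+b*d2^+2+c*d3^+2=0.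
Proof.
set N := Nmat _ _ _ _ _ _ => hr.
have : kermx N != 0.
  apply/eqP => K0; have := mxrank_ker N; rewrite K0 mxrank0; lia.
case/rowV0Pn => v /sub_kermxP vN v0.
have E j : \sum_(i < 3) v 0 i * N i j = 0.
  by move/matrixP: vN => /(_ 0 j); rewrite !mxE.
exists (v 0 0), (v 0 1), (v 0 2); split.
  apply: contra v0 => /and3P[/eqP h0 /eqP h1 /eqP h2]; apply/eqP/rowP => j.
  rewrite !mxE; case: j => [[|[|[|]]] ?] //.
  - by rewrite (_ : Ordinal _ = 0) ?h0 //; apply: val_inj.
  - by rewrite (_ : Ordinal _ = 1) ?h1 //; apply: val_inj.
  - by rewrite (_ : Ordinal _ = 2) ?h2 //; apply: val_inj.
have := E (@Ordinal 7 0 isT); have := E (@Ordinal 7 1 isT);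
have := E (@Ordinal 7 2 isT); have := E (@Ordinal 7 5 isT).
rewrite !big_ord_recl !big_ord0 /N /Nmat !mxE /= /Nrow /vec3 /=.
have -> : (lift ord0 (lift ord0 ord0) : 'I_3) = 2 by apply: val_inj.
have -> : (lift ord0 ord0 : 'I_3) = 1 by apply: val_inj.
have -> : (ord0 : 'I_3) = 0 by apply: val_inj.
rewrite !addr0 !mulr1 => h1 h2 h3 h4.
by rewrite -!addrA.
Qed.

Lemma rankN1 d1 d2 d3 : \rank (N1mat d1 d2 d3) = 2%N -> ~ (d1 = d2 /\ d2 = d3).
Proof.
move=> hr [e1 e2]; subst d2 d3.
have eN : N1mat d1 d1 d1 = (\col_(i < 3) (1:rat)) *m
   (\row_(j < 2) (if val j == 0%N then 1 else d1)).
  apply/matrixP => i j; rewrite !mxE big_ord1 !mxE mul1r /vec3.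
  by case: (val i) => [|[|]].
rewrite eN in hr.
have := mxrankM_maxl (\col_(i < 3) (1:rat)) (\row_(j < 2) (if val j == 0%N then 1 else d1)).
have := rank_leq_col (\col_(i < 3) (1:rat)).
rewrite hr; lia.
Qed.

Lemma cases3 (a b c x1 x2 x3 d1 d2 d3 : rat) : ~~ [&& a == 0, b == 0 & c == 0] ->
   a+b+c=0 -> a*d1+b*d2+c*d3=0 -> a*x1+b*x2+c*x3=0 -> a*d1^+2+b*d2^+2+c*d3^+2=0 ->
   ~ (d1 = d2 /\ d2 = d3) ->
   (d1 = d2 /\ x1 = x2 /\ d3 != d1) \/ (d2 = d3 /\ x2 = x3 /\ d1 != d2) \/
   (d1 = d3 /\ x1 = x3 /\ d2 != d1).
Proof.
move=> nz E1 E2 E3 E4 nall.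
have Ha : a * (d1 - d2) * (d1 - d3) = 0.
  have -> : a * (d1 - d2) * (d1 - d3) =
    (a*d1^+2+b*d2^+2+c*d3^+2) - (d2+d3)*(a*d1+b*d2+c*d3) + d2*d3*(a+b+c) by ring.
  by rewrite E1 E2 E4; ring.
have Hb : b * (d2 - d1) * (d2 - d3) = 0.
  have -> : b * (d2 - d1) * (d2 - d3) =
    (a*d1^+2+b*d2^+2+c*d3^+2) - (d1+d3)*(a*d1+b*d2+c*d3) + d1*d3*(a+b+c) by ring.
  by rewrite E1 E2 E4; ring.
have Hc : c * (d3 - d1) * (d3 - d2) = 0.
  have -> : c * (d3 - d1) * (d3 - d2) =
    (a*d1^+2+b*d2^+2+c*d3^+2) - (d1+d2)*(a*d1+b*d2+c*d3) + d1*d2*(a+b+c) by ring.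
  by rewrite E1 E2 E4; ring.
have sub0 (u w : rat) : (u - w == 0) = (u == w) by rewrite subr_eq0.
case: (eqVneq d1 d2) => e12.
  have n31 : d3 != d1 by apply/eqP => e; apply: nall; split; [done | by rewrite -e12 e].
  have c0 : c = 0.
    move/eqP: Hc; rewrite !mulf_eq0 !sub0 -e12 (negPf n31) !orbF => /eqP //.
  subst c; left; split => //; split => //.
  have ba : b = - a by apply/eqP; rewrite -addr_eq0 addrC; apply/eqP; move: E1; rewrite addr0.
  subst b; have a0 : a != 0 by apply: contra nz => /eqP ->; rewrite oppr0 !eqxx.
  apply/eqP; rewrite -sub0; move: E3; rewrite mul0r addr0 mulNr.
  have -> : a * x1 - a * x2 = a * (x1 - x2) by ring.
  by move/eqP; rewrite mulf_eq0 (negPf a0).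
case: (eqVneq d1 d3) => e13.
  have b0 : b = 0.
    move/eqP: Hb; rewrite !mulf_eq0 !sub0 -e13 [d2 == d1]eq_sym (negPf e12) !orbF => /eqP //.
  subst b; right; right; split => //; split; last by move: e12; rewrite eq_sym.
  have ca : c = - a by apply/eqP; rewrite -addr_eq0 addrC; apply/eqP; move: E1; rewrite addr0.
  subst c; have a0 : a != 0 by apply: contra nz => /eqP ->; rewrite oppr0 !eqxx.
  apply/eqP; rewrite -sub0; move: E3; rewrite mul0r addr0 mulNr.
  have -> : a * x1 - a * x3 = a * (x1 - x3) by ring.
  by move/eqP; rewrite mulf_eq0 (negPf a0).
have a0 : a = 0.
  by move/eqP: Ha; rewrite !mulf_eq0 !sub0 (negPf e12) (negPf e13) !orbF => /eqP.
subst a.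
case: (eqVneq d2 d3) => e23.
  right; left; split => //; split => //.
  have cb : c = - b by move: E1; rewrite add0r addrC => /eqP; rewrite addr_eq0 => /eqP.
  subst c; have b0 : b != 0 by apply: contra nz => /eqP ->; rewrite oppr0 !eqxx.
  apply/eqP; rewrite -sub0; move: E3; rewrite mul0r add0r mulNr.
  have -> : b * x2 - b * x3 = b * (x2 - x3) by ring.
  by move/eqP; rewrite mulf_eq0 (negPf b0).
have b0 : b = 0.
  by move/eqP: Hb; rewrite !mulf_eq0 !sub0 [d2 == d1]eq_sym (negPf e12) (negPf e23) !orbF => /eqP.
subst b.
have c0 : c = 0 by move: E1; rewrite !add0r.
by subst c; move: nz; rewrite eqxx.
Qed.

Lemma lin_a (q0 q1 q2 d1 d2 d3 : rat) : q0 + (q1 + q2) = 0 ->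
  d1*q0 + (d2*q1 + d3*q2) = 0 -> d1 = d2 -> d3 != d1 -> q2 = 0.
Proof.
move=> S1 Sd e n; subst d2.
have : q2 * (d3 - d1) = (d1*q0 + (d1*q1 + d3*q2)) - d1 * (q0 + (q1 + q2)) by ring.
rewrite S1 Sd mulr0 subrr => /eqP; rewrite mulf_eq0 subr_eq0 (negPf n) orbF.
by move/eqP.
Qed.

Lemma sq2 (x d : rat) : 0 < x -> x ^+ 2 + x ^+ 2 - d ^+ 2 = 0 -> False.
Proof.
move=> hx q; apply: (@no_sqrt2 d x (lt0r_neq0 hx)).
have -> : 2 * x ^+ 2 = d ^+ 2 + (x ^+ 2 + x ^+ 2 - d ^+ 2) by ring.
by rewrite q addr0.
Qed.

Theorem theorem6p2 :
  (~ exists x1 x2 x3 d1 d2 d3 L : rat,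
       (0 < x1 /\ 0 < x2 /\ 0 < x3 /\ 0 < d1 /\ 0 < d2 /\ 0 < d3) /\
       [/\ (\rank (Nmat x1 x2 x3 d1 d2 d3) <= 2)%N,
           \rank (N1mat d1 d2 d3) = 2%N,
           \rank (N2mat x1 x2 x3) = 2%N &
           ptilde_all_zero x1 x2 x3 d1 d2 d3 L]) /\
  (~ exists x1 x2 x3 d1 d2 d3 L : rat,
       (0 < x1 /\ 0 < x2 /\ 0 < x3 /\ 0 < d1 /\ 0 < d2 /\ 0 < d3) /\
       [/\ (\rank (Nmat x1 x2 x3 d1 d2 d3) <= 2)%N,
           \rank (N1mat d1 d2 d3) = 2%N,
           \rank (N2mat x1 x2 x3) = 2%N &
           [/\ p0 x1 x2 x3 L = 0,
               pp x1 x2 x3 d1 d2 d3 0 = 0,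
               pp x1 x2 x3 d1 d2 d3 1 = 0 &
               pp x1 x2 x3 d1 d2 d3 2 = 0]]).
Proof.
split.
- case=> [x1 [x2 [x3 [d1 [d2 [d3 [L [[h1 [h2 [h3 [h4 [h5 h6]]]]] [hN hN1 hN2 hP]]]]]]]]].
  have [a [b [c [nz [E1 [E2 [E3 E4]]]]]]] := @kerN _ _ _ _ _ _ hN.
  have := @cases3 _ _ _ _ _ _ _ _ _ nz E1 E2 E3 E4 (@rankN1 _ _ _ hN1).
  case: hP => _ [S1 [Sd _]].
  move: S1 Sd; rewrite /ptilde_sum !big_ord_recl !big_ord0 /pp /vec3 /= !mul1r !addr0.
  move=> S1 Sd.
  case=> [[e12 [ex n]]|[[e23 [ex n]]|[e13 [ex n]]]].
  + have := @lin_a _ _ _ _ _ _ S1 Sd e12 n; rewrite -ex; exact: sq2 h1.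
  + have S1' : (x3 ^+ 2 + x1 ^+ 2 - d2 ^+ 2) + ((x1 ^+ 2 + x2 ^+ 2 - d3 ^+ 2) + (x2 ^+ 2 + x3 ^+ 2 - d1 ^+ 2)) = 0.
      by rewrite -S1; ring.
    have Sd' : d2 * (x3 ^+ 2 + x1 ^+ 2 - d2 ^+ 2) + (d3 * (x1 ^+ 2 + x2 ^+ 2 - d3 ^+ 2) + d1 * (x2 ^+ 2 + x3 ^+ 2 - d1 ^+ 2)) = 0.
      by rewrite -Sd; ring.
    have := @lin_a _ _ _ _ _ _ S1' Sd' e23 n; rewrite -ex; exact: sq2 h2.
  + have S1' : (x2 ^+ 2 + x3 ^+ 2 - d1 ^+ 2) + ((x1 ^+ 2 + x2 ^+ 2 - d3 ^+ 2) + (x3 ^+ 2 + x1 ^+ 2 - d2 ^+ 2)) = 0.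
      by rewrite -S1; ring.
    have Sd' : d1 * (x2 ^+ 2 + x3 ^+ 2 - d1 ^+ 2) + (d3 * (x1 ^+ 2 + x2 ^+ 2 - d3 ^+ 2) + d2 * (x3 ^+ 2 + x1 ^+ 2 - d2 ^+ 2)) = 0.
      by rewrite -Sd; ring.
    have := @lin_a _ _ _ _ _ _ S1' Sd' e13 n.
    have -> : x3 ^+ 2 + x1 ^+ 2 - d2 ^+ 2 = x1 ^+ 2 + x1 ^+ 2 - d2 ^+ 2 by rewrite ex.
    exact: sq2 h1.
- case=> [x1 [x2 [x3 [d1 [d2 [d3 [L [[h1 [h2 [h3 [h4 [h5 h6]]]]] [hN hN1 hN2 hP]]]]]]]]].
  have [a [b [c [nz [E1 [E2 [E3 E4]]]]]]] := @kerN _ _ _ _ _ _ hN.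
  have := @cases3 _ _ _ _ _ _ _ _ _ nz E1 E2 E3 E4 (@rankN1 _ _ _ hN1).
  case: hP => _; rewrite /pp /= => q0 q1 q2.
  case=> [[e12 [ex n]]|[[e23 [ex n]]|[e13 [ex n]]]].
  + by move: q2; rewrite -ex; exact: sq2 h1.
  + by move: q0; rewrite -ex; exact: sq2 h2.
  + by move: q1; rewrite -ex; exact: sq2 h1.
Qed.
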